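(* Let $k,t$ be integers with $k\geq t\geq 1$. Then there exists a connected graph $G=G_{k,t}$ with $\Delta(G)=2t^2+1$ and $\operatorname{diam}(G)=2t^2+1+k$ such that $prc(G)\geq rc(G)+t$.
   Context: A path in an edge-coloured graph is a rainbow path if its edges receive pairwise distinct colours. The rainbow connection number $rc(G)$ of a connected graph $G$ is the minimum number of colours in an edge-colouring such that every two distinct vertices are joined by a rainbow path. The proper rainbow connection number $prc(G)$ is the minimum number of colours in a proper edge-colouring (adjacent edges get distinct colours) such that every two distinct vertices are joined by a rainbow path. $\Delta(G)$ is the maximum degree and $\operatorname{diam}(G)$ the diameter. *)

(* Defs.v *)
From Stdlib Require Import ClassicalEpsilon.
From mathcomp Require Import all_boot.
Set Implicit Arguments. Unset Strict Implicit. Unset Printing Implicit Defensive.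

(* The least natural number satisfying P (chosen classically). When some n
   satisfies P this is the genuine minimum (well-ordering of nat). *)
Definition least (P : nat -> Prop) : nat :=
  epsilon (inhabits 0%N) (fun n => P n /\ forall m, P m -> n <= m).

Section Graphs.
Variable T : finType.
Variable e : rel T.

Definition simple_graph : Prop := symmetric e /\ irreflexive e.

Definition connected_graph : Prop := forall u v : T, connect e u v.

Definition degree (v : T) : nat := #|[set u | e v u]|.
Definition max_degree : nat := \max_(v : T) degree v.

Definition dist (u v : T) : nat :=
  least (fun d => exists p : seq T, [/\ path e u p, last u p = v & size p = d]).
Definition diameter : nat := \max_(u : T) \max_(v : T) dist u v.

(* An edge-colouring with (at most) k colours: colour c x y of edge xy,
   independent of orientation. *)
Definition edge_colouring (k : nat) (c : T -> T -> 'I_k) : Prop :=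
  forall x y, e x y -> c x y = c y x.

Definition proper_colouring (k : nat) (c : T -> T -> 'I_k) : Prop :=
  forall x y z, e x y -> e x z -> y != z -> c x y != c x z.

Definition rainbow_path (k : nat) (c : T -> T -> 'I_k) (u v : T) (p : seq T) : bool :=
  [&& path e u p, last u p == v, uniq (u :: p) & uniq (pairmap c u p)].

Definition rainbow_connected (k : nat) (c : T -> T -> 'I_k) : Prop :=
  forall u v : T, u != v -> exists p : seq T, rainbow_path c u v p.

Definition rc : nat :=
  least (fun k => exists c : T -> T -> 'I_k, edge_colouring c /\ rainbow_connected c).

Definition prc : nat :=
  least (fun k => exists c : T -> T -> 'I_k,
           [/\ edge_colouring c, proper_colouring c & rainbow_connected c]).
End Graphs.

(* Main.v *)
Require Import Defs.
From Stdlib Require Import ClassicalEpsilon Classical.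
From mathcomp Require Import all_boot zify.
Set Implicit Arguments. Unset Strict Implicit. Unset Printing Implicit Defensive.

Lemma least_spec (P : nat -> Prop) :
  (exists n, P n) -> P (least P) /\ forall m, P m -> least P <= m.
Proof.
move=> [n Pn].
have ex : exists n, P n /\ forall m, P m -> n <= m.
  elim/ltn_ind: n Pn => n IH Pn.
  case: (classic (exists m, m < n /\ P m)) => [[m [lt Pm]]|H].
    exact: IH m lt Pm.
  exists n; split => // m Pm; rewrite leqNgt; apply/negP => lt; apply: H.
  by exists m.
exact: (epsilon_spec (inhabits 0) _ ex).
Qed.

Lemma last_rev_belast (T : Type) (y : T) s : last (last y s) (rev (belast y s)) = y.
Proof.
case: s => [|z s] //=.
by rewrite rev_cons last_rcons.
Qed.

Lemma pairmap_rev (T U : Type) (f : T -> T -> U) :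
  (forall a b, f a b = f b a) ->
  forall x s, pairmap f (last x s) (rev (belast x s)) = rev (pairmap f x s).
Proof.
move=> fs x s; elim: s x => [|y s IH] x //=.
rewrite rev_cons -cats1 pairmap_cat IH /= last_rev_belast rev_cons -cats1 fs //.
Qed.

Lemma uniq_rev_belast (T : eqType) (x : T) s :
  uniq (last x s :: rev (belast x s)) = uniq (x :: s).
Proof. by rewrite -rev_rcons -lastI rev_uniq. Qed.

Lemma mem_rev_belast (T : eqType) (x : T) s z :
  (z \in last x s :: rev (belast x s)) = (z \in x :: s).
Proof. by rewrite -rev_rcons -lastI mem_rev. Qed.

Lemma zip_edge (T : eqType) (e : rel T) x p a b :
  path e x p -> (a, b) \in zip (x :: p) p -> e a b.
Proof.
elim: p x => [|y p IH] x //=.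
case/andP => exy pp; rewrite inE; case/orP => [/eqP [-> ->]|] //.
exact: IH.
Qed.

Lemma crossing (T : eqType) (P : pred T) x p :
  P x -> ~~ P (last x p) -> exists a b, [/\ (a, b) \in zip (x :: p) p, P a & ~~ P b].
Proof.
elim: p x => [|y p IH] x /=; first by move=> ->.
move=> Px Pl; case Py: (P y).
  have [a [b [H1 H2 H3]]] := IH y Py Pl.
  by exists a, b; rewrite inE H1 orbT.
by exists x, y; rewrite inE eqxx Py.
Qed.

Lemma pairmap_zip (T U : Type) (f : T -> T -> U) x p :
  pairmap f x p = map (fun ab => f ab.1 ab.2) (zip (x :: p) p).
Proof. by elim: p x => [|y p IH] x //=; rewrite IH. Qed.

Lemma uniq_map_inj (T U : eqType) (g : T -> U) s a b :
  uniq (map g s) -> a \in s -> b \in s -> g a = g b -> a = b.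
Proof.
elim: s => [|z s IH] //= /andP [nz us].
rewrite !inE => /orP [/eqP ->|as_] /orP [/eqP ->|bs] // gab.
- by move: nz; rewrite gab (map_f g bs).
- by move: nz; rewrite -gab (map_f g as_).
- exact: IH.
Qed.

Lemma rainbow_distinct (T : eqType) K (c : T -> T -> 'I_K) x p ab ab' :
  uniq (pairmap c x p) -> ab \in zip (x :: p) p -> ab' \in zip (x :: p) p ->
  c ab.1 ab.2 = c ab'.1 ab'.2 -> ab = ab'.
Proof.
rewrite pairmap_zip => u h h' E.
exact: (uniq_map_inj (g := fun ab => c ab.1 ab.2)) u h h' E.
Qed.

Lemma uniq_size_ord K (s : seq 'I_K) : uniq s -> size s <= K.
Proof. by move/card_uniqP <-; rewrite -[X in _ <= X]card_ord max_card. Qed.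

Lemma walk_potential (T : Type) (e : rel T) (h : T -> nat) x p :
  (forall a b, e a b -> h b <= (h a).+1) -> path e x p -> h (last x p) <= h x + size p.
Proof.
move=> hb; elim: p x => [|y p IH] x /=; first by rewrite addn0.
case/andP => exy pp; have := IH y pp; have := hb _ _ exy; lia.
Qed.

Lemma zip_mem (T : eqType) (s t : seq T) a b :
  (a, b) \in zip s t -> a \in s /\ b \in t.
Proof.
elim: s t => [|x s IH] [|y t] //=.
rewrite inE => /orP [/eqP [-> ->]|/IH [h1 h2]]; first by rewrite !inE !eqxx.
by rewrite !inE h1 h2 !orbT.
Qed.

Lemma uniq_pairmap_inj (T U : eqType) (f : T -> T -> U) :
  (forall a b a' b', f a b = f a' b' -> (a = a' /\ b = b') \/ (a = b' /\ b = a')) ->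
  forall x p, uniq (x :: p) -> uniq (pairmap f x p).
Proof.
move=> finj x p; elim: p x => [|y p IH] x //=.
case/andP => nx uyp; rewrite IH // andbT.
apply/negP; rewrite pairmap_zip => /mapP [[a b] hab /= E].
have [ha hb] := zip_mem hab.
have hb' : b \in y :: p by rewrite inE hb orbT.
case: (finj _ _ _ _ E) => [[ea _]|[ea _]].
  by move: nx; rewrite ea ha.
by move: nx; rewrite ea hb'.
Qed.

Lemma enc_lt n a b : a < n -> b < n -> minn a b * n + maxn a b < (n*n).+1.
Proof.
move=> ha hb.
have : minn a b <= maxn a b by lia.
have : maxn a b < n by lia.
move: (minn a b) (maxn a b) => m M hM hm; have hmn : m < n by lia.
have : m.+1 * n <= n * n by rewrite leq_mul2r hmn orbT.
rewrite mulSn; lia.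
Qed.

Lemma prc_exists n (e : rel 'I_n) : connected_graph e ->
  exists K (c : 'I_n -> 'I_n -> 'I_K),
    [/\ edge_colouring e c, proper_colouring e c & rainbow_connected e c].
Proof.
move=> conn.
pose c := fun x y : 'I_n => (inord (minn x y * n + maxn x y) : 'I_(n * n).+1).
have cinj : forall a b a' b', c a b = c a' b' -> (a = a' /\ b = b') \/ (a = b' /\ b = a').
  move=> a b a' b' /(congr1 val); rewrite /c /= !inordK; last first.
  - exact: enc_lt.
  - exact: enc_lt.
  have := ltn_ord a'; have := ltn_ord b'; have := ltn_ord a; have := ltn_ord b.
  move=> h1 h2 h3 h4 E.
  have [m1 m2] : minn a b = minn a' b' /\ maxn a b = maxn a' b'.
    case: (ltngtP (minn a b) (minn a' b')) => hm.
    - exfalso; nia.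
    - exfalso; nia.
    - split => //; move: E; rewrite hm; lia.
  case: (leqP a b) => hab; case: (leqP a' b') => hab'.
  - left; split; apply: ord_inj; lia.
  - right; split; apply: ord_inj; lia.
  - right; split; apply: ord_inj; lia.
  - left; split; apply: ord_inj; lia.
exists (n * n).+1, c; split.
- by move=> x y _; rewrite /c minnC maxnC.
- move=> x y z _ _ yz; apply/negP => /eqP /cinj [[_ h]|[h1 h2]].
    by rewrite h eqxx in yz.
  by rewrite h2 h1 eqxx in yz.
- move=> u v uv; have /connectP [p pp ->] := conn u v.
  case: (shortenP pp) => p' pp' up' _.
  exists p'; rewrite /rainbow_path pp' eqxx up' /=.
  exact: uniq_pairmap_inj.
Qed.
Section G.
Variables L d : nat.
Hypothesis L1 : 0 < L.
Hypothesis d1 : 0 < d.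

Definition Nv := L + 2 * d.

Definition E : rel nat := fun x y =>
  [|| (x <= L) && (y <= L) && ((x == y.+1) || (y == x.+1)),
      (x == 0) && (L < y), (y == 0) && (L < x) |
      [&& L < x, L < y, x != y & (x - L.+1) %/ 2 == (y - L.+1) %/ 2]].

Definition col (x y : nat) : nat :=
  if maxn x y <= L then minn x y
  else if minn x y == 0 then
    (if ((maxn x y - L.+1) %% 2 == 0) || (d == 1) then L else 0)
  else (if d == 1 then 0 else L.+1).

Definition Kc := if d == 1 then L else L.+1.

Lemma Esym x y : E x y = E y x.
Proof. rewrite /E; apply/idP/idP; lia. Qed.

Lemma colsym x y : col x y = col y x.
Proof. by rewrite /col minnC maxnC. Qed.

Lemma col_lt x y : col x y < Kc.+1.
Proof. rewrite /col /Kc; repeat case: ifP => ?; lia. Qed.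

Lemma col_b i : i < L -> col i i.+1 = i.
Proof. move=> h; rewrite /col; repeat case: ifP => ?; lia. Qed.

Lemma col_u0 j : col (L.+1 + 2 * j) 0 = L.
Proof. rewrite /col; repeat case: ifP => ?; lia. Qed.

Lemma col_v0 j : col (L.+2 + 2 * j) 0 = if d == 1 then L else 0.
Proof. rewrite /col; repeat case: ifP => ?; lia. Qed.

Lemma col_uv j : col (L.+1 + 2 * j) (L.+2 + 2 * j) = if d == 1 then 0 else L.+1.
Proof. rewrite /col; repeat case: ifP => ?; lia. Qed.

Definition rb x y s := [&& all (fun z => z <= Nv) (x :: s), path E x s, last x s == y,
  uniq (x :: s) & uniq (pairmap col x s)].

Lemma rb_rev x y s : rb x y s -> rb y x (rev (belast x s)).
Proof.
case/and5P => a p /eqP l u c; apply/and5P; split.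
- apply/allP => z; rewrite -l mem_rev_belast => hz; exact: (allP a).
- rewrite -l rev_path; move: p; apply: sub_path => u1 v1 /=; by rewrite Esym.
- by rewrite -l last_rev_belast.
- by rewrite -l uniq_rev_belast.
- by rewrite -l pairmap_rev ?rev_uniq //; exact: colsym.
Qed.

Lemma path_iota x m : x + m <= L -> path E x (iota x.+1 m).
Proof.
elim: m x => [|m IH] x //= h; rewrite IH; last lia.
by rewrite andbT /E; apply/orP; left; lia.
Qed.

Lemma last_iota x m : last x (iota x.+1 m) = x + m.
Proof. elim: m x => [|m IH] x /=; [lia | rewrite IH; lia]. Qed.

Lemma pairmap_iota x m : x + m <= L -> pairmap col x (iota x.+1 m) = iota x m.
Proof.
elim: m x => [|m IH] x //= h; rewrite IH; last lia.
by rewrite col_b //; lia.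
Qed.

Lemma rb_up x y : x < y <= L -> rb x y (iota x.+1 (y - x)).
Proof.
move=> h; apply/and5P; split.
- apply/allP => z; rewrite inE mem_iota /Nv; lia.
- apply: path_iota; lia.
- rewrite last_iota; apply/eqP; lia.
- by rewrite -[_ :: _]/(iota x (y - x).+1) iota_uniq.
- by rewrite pairmap_iota ?iota_uniq //; lia.
Qed.

Lemma tri_form w : L < w <= Nv ->
  exists2 j, j < d & (w = L.+1 + 2 * j \/ w = L.+2 + 2 * j).
Proof. rewrite /Nv => h; exists ((w - L.+1) %/ 2); lia. Qed.

Lemma col_0u j : col 0 (L.+1 + 2 * j) = L.
Proof. by rewrite colsym col_u0. Qed.
Lemma col_0v j : col 0 (L.+2 + 2 * j) = if d == 1 then L else 0.
Proof. by rewrite colsym col_v0. Qed.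
Lemma col_vu j : col (L.+2 + 2 * j) (L.+1 + 2 * j) = if d == 1 then 0 else L.+1.
Proof. by rewrite colsym col_uv. Qed.

Ltac solve_rb := apply/and5P; split;
  [ apply/allP => z; rewrite /Nv !inE ?mem_iota; lia
  | rewrite /= ?path_iota ?andbT /E; lia
  | rewrite /= ?last_iota; apply/eqP; lia
  | rewrite /= !inE ?mem_iota ?iota_uniq ?andbT; lia
  | rewrite /= ?col_u0 ?col_v0 ?col_0u ?col_0v ?col_uv ?col_vu ?pairmap_iota ?inE ?mem_iota ?iota_uniq ?andbT;
    repeat case: ifP => ?; lia ].

Lemma rb_tri_bridge w y : L < w <= Nv -> y <= L -> exists s, rb w y s.
Proof.
move=> hw hy; have [j hj [->|->]] := tri_form hw.
  by exists (0 :: iota 1 y); solve_rb.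
case hd: (d == 1).
  by exists (0 :: iota 1 y); solve_rb.
by exists (L.+1 + 2 * j :: 0 :: iota 1 y); solve_rb.
Qed.

Lemma rb_tri_tri w w' : L < w <= Nv -> L < w' <= Nv -> w != w' -> exists s, rb w w' s.
Proof.
move=> hw hw' ww.
have [i hi fi] := tri_form hw; have [j hj fj] := tri_form hw'.
case: (eqVneq i j) => [eij|nij].
  subst j; exists [:: w']; case: fi => ?; case: fj => ?; subst w w'; solve_rb.
have hd : (d == 1) = false by apply/negbTE; apply/eqP; lia.
case: fi => ->; case: fj => ->.
- by exists [:: L.+2 + 2 * i; 0; L.+1 + 2 * j]; solve_rb.
- by exists [:: 0; L.+2 + 2 * j]; solve_rb.
- by exists [:: 0; L.+1 + 2 * j]; solve_rb.
- by exists [:: 0; L.+1 + 2 * j; L.+2 + 2 * j]; solve_rb.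
Qed.

Lemma rb_all u v : u <= Nv -> v <= Nv -> u != v -> exists s, rb u v s.
Proof.
move=> hu hv uv.
case: (leqP u L) => hu'; case: (leqP v L) => hv'.
- case: (ltngtP u v) => h.
  + exists (iota u.+1 (v - u)); apply: rb_up; lia.
  + have := rb_up (x := v) (y := u); move=> H.
    exists (rev (belast v (iota v.+1 (u - v)))); apply: rb_rev; apply: H; lia.
  + by rewrite h eqxx in uv.
- have [s hs] := rb_tri_bridge (w := v) (y := u) ltac:(lia) hu'.
  by exists (rev (belast v s)); apply: rb_rev.
- exact: (rb_tri_bridge (w := u) (y := v) ltac:(lia) hv').
- exact: (rb_tri_tri (w := u) (w' := v) ltac:(lia) ltac:(lia) uv).
Qed.

Definition wk x y s := [&& all (fun z => z <= Nv) (x :: s), path E x s, last x s == y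
  & size s <= L.+1].

Lemma wk_rev x y s : wk x y s -> wk y x (rev (belast x s)).
Proof.
case/and4P => a p /eqP l sz; apply/and4P; split.
- apply/allP => z; rewrite -l mem_rev_belast => hz; exact: (allP a).
- rewrite -l rev_path; move: p; apply: sub_path => u1 v1 /=; by rewrite Esym.
- by rewrite -l last_rev_belast.
- by rewrite size_rev size_belast.
Qed.

Ltac solve_wk := apply/and4P; split;
  [ apply/allP => z; rewrite /Nv !inE ?mem_iota; lia
  | rewrite /= ?path_iota ?andbT /E; lia
  | rewrite /= ?last_iota; apply/eqP; lia
  | rewrite /= ?size_iota; lia ].

Lemma wk_tri_bridge w y : L < w <= Nv -> y <= L -> exists s, wk w y s.
Proof.
move=> hw hy; have [j hj [?|?]] := tri_form hw; subst w;
  by exists (0 :: iota 1 y); solve_wk.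
Qed.

Lemma wk_all u v : u <= Nv -> v <= Nv -> exists s, wk u v s.
Proof.
move=> hu hv.
case: (eqVneq u v) => [<-|uv].
  by exists [::]; rewrite /wk /= hu eqxx.
case: (leqP u L) => hu'; case: (leqP v L) => hv'.
- case: (ltngtP u v) => h.
  + exists (iota u.+1 (v - u)); solve_wk.
  + exists (rev (belast v (iota v.+1 (u - v)))); apply: wk_rev; solve_wk.
  + by rewrite h eqxx in uv.
- have [s hs] := wk_tri_bridge (w := v) (y := u) ltac:(lia) hu'.
  by exists (rev (belast v s)); apply: wk_rev.
- exact: (wk_tri_bridge (w := u) (y := v) ltac:(lia) hv').
- have [i hi fi] := tri_form (w := u) ltac:(lia).
  have [j hj fj] := tri_form (w := v) ltac:(lia).
  case: (eqVneq i j) => [eij|nij].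
    subst j; exists [:: v]; case: fi => ?; case: fj => ?; subst u v; solve_wk.
  exists [:: 0; v]; case: fi => ?; case: fj => ?; subst u v; solve_wk.
Qed.

Definition eI : rel 'I_Nv.+1 := fun a b => E a b.
Definition cI (a b : 'I_Nv.+1) : 'I_Kc.+1 := inord (col a b).

Lemma path_inord x s : all (fun z => z <= Nv) (x :: s) ->
  path eI (inord x) (map (@inord Nv) s) = path E x s.
Proof.
elim: s x => [|y s IH] x //= /andP [hx /andP [hy hs]].
by rewrite IH /= ?hy ?hs // /eI !inordK.
Qed.

Lemma pairmap_inord x s : all (fun z => z <= Nv) (x :: s) ->
  pairmap cI (inord x) (map (@inord Nv) s) = map inord (pairmap col x s).
Proof.
elim: s x => [|y s IH] x //= /andP [hx /andP [hy hs]].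
by rewrite IH /= ?hy ?hs // /cI !inordK.
Qed.

Lemma uniq_inord n (s : seq nat) : all (fun z => z < n.+1) s ->
  uniq (map (fun z => (inord z : 'I_n.+1)) s) = uniq s.
Proof.
move=> a; apply: map_inj_in_uniq => u v hu hv /(congr1 (@nat_of_ord _)).
by rewrite !inordK //; [exact: (allP a) | exact: (allP a)].
Qed.

Lemma rb_rainbow x y s : rb x y s -> rainbow_path eI cI (inord x) (inord y) (map (@inord Nv) s).
Proof.
case/and5P => a p /eqP l u c; apply/and4P; split.
- by rewrite path_inord.
- by rewrite last_map l.
- by rewrite -(map_cons inord) uniq_inord.
- rewrite pairmap_inord // uniq_inord //.
  apply/allP => z; rewrite pairmap_zip => /mapP [ab _ ->]; exact: col_lt.
Qed.

Lemma rc_conn : rainbow_connected eI cI.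
Proof.
move=> u v uv.
have [s hs] := rb_all (u := u) (v := v) (ltn_ord u) (ltn_ord v) uv.
by exists (map (@inord Nv) s); rewrite -[u]inord_val -[v]inord_val; exact: rb_rainbow.
Qed.

Lemma conn_eI : connected_graph eI.
Proof.
move=> u v; case: (eqVneq u v) => [->|uv]; first exact: connect0.
have [p /and4P [pp /eqP l _ _]] := rc_conn uv.
by apply/connectP; exists p.
Qed.

Lemma simple_eI : simple_graph eI.
Proof.
split; first by move=> a b; rewrite /eI Esym.
by move=> a; rewrite /eI /E; apply/negP; lia.
Qed.

Lemma rc_le : rc eI <= Kc.+1.
Proof.
have ex : exists k, exists c : 'I_Nv.+1 -> 'I_Nv.+1 -> 'I_k,
    edge_colouring eI c /\ rainbow_connected eI c.
  exists Kc.+1, cI; split; last exact: rc_conn.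
  by move=> a b _; rewrite /cI colsym.
have [_ H] := least_spec ex; apply: H.
exists cI; split; last exact: rc_conn.
by move=> a b _; rewrite /cI colsym.
Qed.

Lemma wk_walk x y s : wk x y s ->
  [/\ path eI (inord x) (map (@inord Nv) s), last (inord x) (map (@inord Nv) s) = inord y
    & size (map (@inord Nv) s) <= L.+1].
Proof.
case/and4P => a p /eqP l sz; split.
- by rewrite path_inord.
- by rewrite last_map l.
- by rewrite size_map.
Qed.

Lemma dist_le u v : dist eI u v <= L.+1.
Proof.
have [s hs] := wk_all (u := u) (v := v) (ltn_ord u) (ltn_ord v).
have [h1 h2 h3] := wk_walk hs.
rewrite !inord_val in h1 h2.
have ex : exists m, exists p, [/\ path eI u p, last u p = v & size p = m].
  by exists (size (map (@inord Nv) s)), (map (@inord Nv) s).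
have [_ H] := least_spec ex.
apply: leq_trans h3; apply: H; by exists (map (@inord Nv) s).
Qed.

Lemma dist_ge : L.+1 <= dist eI (inord L) (inord L.+1).
Proof.
have [s hs] := wk_all (u := L) (v := L.+1) ltac:(rewrite /Nv; lia) ltac:(rewrite /Nv; lia).
have [h1 h2 h3] := wk_walk hs.
have ex : exists m, exists p, [/\ path eI (inord L) p, last (inord L) p = inord L.+1 & size p = m].
  by exists (size (map (@inord Nv) s)), (map (@inord Nv) s).
have [[p [pp pl ps]] _] := least_spec ex.
rewrite /dist -ps.
pose h := fun z : 'I_Nv.+1 => if nat_of_ord z <= L then L - nat_of_ord z else L.+1.
have hb : forall a b, eI a b -> h b <= (h a).+1.
  move=> a b; rewrite /eI /E /h; case: ifP; case: ifP; lia.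
have := walk_potential hb pp.
rewrite pl /h /= !inordK /Nv; try lia.
by case: ifP; case: ifP; lia.
Qed.

Lemma diam_eq : diameter eI = L.+1.
Proof.
apply/eqP; rewrite eqn_leq; apply/andP; split.
  apply/bigmax_leqP => u _; apply/bigmax_leqP => v _; exact: dist_le.
apply: (bigmax_sup (inord L)) => //; apply: (bigmax_sup (inord L.+1)) => //.
exact: dist_ge.
Qed.

Lemma mem_map_inord (S : seq nat) (u : 'I_Nv.+1) : all (fun z => z <= Nv) S ->
  (u \in map (@inord Nv) S) = (nat_of_ord u \in S).
Proof.
move=> a; apply/mapP/idP => [[x hx ->]|h].
  by rewrite inordK //; exact: (allP a).
by exists (nat_of_ord u) => //; rewrite inord_val.
Qed.

Lemma deg0 : degree eI (inord 0) = (2 * d).+1.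
Proof.
rewrite /degree.
have a : all (fun z => z <= Nv) (1 :: iota L.+1 (2 * d)).
  apply/allP => z; rewrite inE mem_iota /Nv; lia.
have -> : #|[set u | eI (inord 0) u]| = #|map (@inord Nv) (1 :: iota L.+1 (2 * d))|.
  apply: eq_card => u; rewrite inE mem_map_inord // /eI inordK // inE mem_iota /E.
  have := ltn_ord u; rewrite /Nv => hu; apply/idP/idP; lia.
have /card_uniqP -> : uniq (map (@inord Nv) (1 :: iota L.+1 (2 * d))).
  rewrite uniq_inord //= ?mem_iota ?iota_uniq ?andbT; lia.
by rewrite size_map /= size_iota.
Qed.

Lemma deg_other (v : 'I_Nv.+1) : v != inord 0 -> degree eI v <= 3.
Proof.
move=> hv; rewrite /degree.
have hv0 : nat_of_ord v != 0.
  apply: contra hv => /eqP h; apply/eqP; apply: ord_inj; rewrite inordK //.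
apply: (@leq_trans #|[:: (inord v.-1 : 'I_Nv.+1); inord v.+1; inord 0]|); last exact: card_size.
apply: subset_leq_card; apply/subsetP => u; rewrite inE /eI /E => h.
have : [|| nat_of_ord u == v.-1, nat_of_ord u == v.+1 | nat_of_ord u == 0] by lia.
rewrite !inE; case/or3P => /eqP hu; rewrite -[u]inord_val hu eqxx ?orbT //.
Qed.

Lemma maxdeg : max_degree eI = (2 * d).+1.
Proof.
apply/eqP; rewrite eqn_leq; apply/andP; split.
  apply/bigmax_leqP => v _; case: (eqVneq v (inord 0)) => [->|hv].
    by rewrite deg0.
  apply: leq_trans (deg_other hv) _; lia.
by apply: (bigmax_sup (inord 0)) => //; rewrite deg0.
Qed.

Section LB.
Variable K : nat.
Variable c : 'I_Nv.+1 -> 'I_Nv.+1 -> 'I_K.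
Hypothesis cs : edge_colouring eI c.
Hypothesis cp : proper_colouring eI c.
Hypothesis cr : rainbow_connected eI c.

Local Notation o i := (@inord Nv i).

Lemma NvE : Nv = L + 2 * d. Proof. by []. Qed.

Definition Bs := [seq c (o i) (o i.+1) | i <- iota 0 L].

Lemma oK i : i <= Nv -> nat_of_ord (o i) = i.
Proof. by move=> h; rewrite inordK. Qed.

Lemma crossing_bridge (s : 'I_Nv.+1) p i :
  (nat_of_ord s == 0) || (L < s) -> path eI s p -> last s p = o L -> i < L ->
  (o i, o i.+1) \in zip (s :: p) p.
Proof.
move=> hs pp pl hi.
have P1 : (nat_of_ord s <= i) || (L < s) by lia.
have P2 : ~~ ((nat_of_ord (last s p) <= i) || (L < last s p)).
  rewrite pl oK; have := NvE; lia.
have [a [b [hab Pa Pb]]] :=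
  @crossing _ (fun z : 'I_Nv.+1 => (nat_of_ord z <= i) || (L < z)) s p P1 P2.
have eab := zip_edge pp hab.
move: eab; rewrite /eI /E => eab.
have ha : nat_of_ord a = i by lia.
have hb : nat_of_ord b = i.+1 by lia.
have ea : a = o i by apply: ord_inj; rewrite oK //; have := NvE; lia.
have eb : b = o i.+1 by apply: ord_inj; rewrite oK //; have := NvE; lia.
by rewrite -ea -eb.
Qed.

Lemma notinB (s : 'I_Nv.+1) p a b :
  (nat_of_ord s == 0) || (L < s) -> rainbow_path eI c s (o L) p ->
  (a, b) \in zip (s :: p) p -> L < a -> c a b \notin Bs.
Proof.
move=> hs /and4P [pp /eqP pl _ up] hab ha; apply/negP => /mapP [i hi eq].
move: hi; rewrite mem_iota => hi.
have hz := crossing_bridge hs pp pl (i := i) ltac:(lia).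
have := rainbow_distinct up hab hz eq => -[ea _].
move: ha; rewrite ea oK; have := NvE; lia.
Qed.

Lemma Buniq : uniq Bs.
Proof.
have h0L : o 0 != o L.
  apply/negP => /eqP /(congr1 (@nat_of_ord _)); rewrite !oK; have := NvE; lia.
have [p rp] := cr h0L.
have rp' := rp; case/and4P: rp' => pp /eqP pl _ up.
rewrite map_inj_in_uniq ?iota_uniq // => i j; rewrite !mem_iota => hi hj eq.
have zi := crossing_bridge (s := o 0) (i := i) ltac:(rewrite oK; have := NvE; lia) pp pl ltac:(lia).
have zj := crossing_bridge (s := o 0) (i := j) ltac:(rewrite oK; have := NvE; lia) pp pl ltac:(lia).
have := rainbow_distinct up zi zj eq => -[/(congr1 (@nat_of_ord _))].
rewrite !oK; have := NvE; lia.
Qed.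

Lemma route (w w' : 'I_Nv.+1) : L < w -> L < w' -> eI w w' ->
  c w (o 0) \notin Bs \/ (c w w' \notin Bs /\ c w' (o 0) \notin Bs).
Proof.
move=> hw hw' eww.
have hwL : w != o L.
  apply/negP => /eqP /(congr1 (@nat_of_ord _)); rewrite !oK; have := NvE; lia.
have [p rp] := cr hwL.
have hs : (nat_of_ord w == 0) || (L < w) by rewrite hw orbT.
have rp' := rp; case/and4P: rp' => pp /eqP pl up _.
case: p pp pl up rp => [|y p] pp pl up rp.
  by move: hwL; rewrite -pl /= eqxx.
move: pp => /= /andP [ewy pp].
have hyw : y != w by apply/eqP => eyw; move: ewy; rewrite eyw (proj2 simple_eI w).
have [y0|yw'] : nat_of_ord y = 0 \/ nat_of_ord y = w'.
- move: ewy eww hyw; rewrite /eI /E => ewy eww hyw.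
  have : nat_of_ord y != w by apply: contraNneq hyw => h; apply/eqP; apply: ord_inj.
  lia.
- left; apply: (notinB (a := w) (b := o 0) hs rp) => //.
  have -> : o 0 = y by apply: ord_inj; rewrite oK.
  by rewrite /= inE eqxx.
- have ey : y = w' by apply: ord_inj.
  subst y.
  case: p pp pl up rp => [|y2 p] pp pl up rp.
    exfalso; move: pl => /= /(congr1 (@nat_of_ord _)); rewrite oK; have := NvE; lia.
  move: pp => /= /andP [ewy2 pp].
  have hy2w : y2 != w.
    apply/negP => /eqP ey2; move: up; rewrite ey2 /= !inE eqxx orbT.
    by [].
  have hy2w' : y2 != w' by apply/eqP => eyw; move: ewy2; rewrite eyw (proj2 simple_eI w').
  have y20 : o 0 = y2.
    apply: ord_inj; rewrite oK //.
    move: ewy2 eww hy2w hy2w'; rewrite /eI /E => ewy2 eww hy2w hy2w'.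
    have : nat_of_ord y2 != w by apply: contraNneq hy2w => h; apply/eqP; apply: ord_inj.
    have : nat_of_ord y2 != w' by apply: contraNneq hy2w' => h; apply/eqP; apply: ord_inj.
    have : nat_of_ord w != w' by apply/negP => /eqP h; move: eww; rewrite h; lia.
    lia.
  right; split.
    by apply: (notinB (a := w) (b := w') hs rp) => //; rewrite /= inE eqxx.
  apply: (notinB (a := w') (b := o 0) hs rp) => //.
  by rewrite y20 /= !inE eqxx orbT.
Qed.

Lemma zero_edges (x y : 'I_Nv.+1) : L < x -> L < y -> x != y -> c x (o 0) != c y (o 0).
Proof.
move=> hx hy xy.
have ex0 : eI (o 0) x by rewrite /eI /E oK; [lia | have := NvE; lia].
have ey0 : eI (o 0) y by rewrite /eI /E oK; [lia | have := NvE; lia].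
rewrite -(cs ex0) -(cs ey0); exact: cp ex0 ey0 xy.
Qed.

Lemma two_new x y : x \notin Bs -> y \notin Bs -> x != y -> L.+2 <= K.
Proof.
move=> hx hy xy.
have U : uniq (Bs ++ [:: x; y]).
  rewrite cat_uniq Buniq /= !inE.
  by move: hx hy xy; case: (x \in Bs); case: (y \in Bs); case: (x == y).
have := uniq_size_ord U; rewrite size_cat size_map size_iota /=; lia.
Qed.

Lemma lb2 : L.+2 <= K.
Proof.
pose u := o L.+1; pose v := o L.+2.
have hu : nat_of_ord u = L.+1 by rewrite oK //; have := NvE; lia.
have hv : nat_of_ord v = L.+2 by rewrite oK //; have := NvE; lia.
have h0 : nat_of_ord (o 0) = 0 by rewrite oK.
have euv : eI u v by rewrite /eI /E hu hv; lia.
have evu : eI v u by rewrite /eI /E hu hv; lia.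
have eu0 : eI u (o 0) by rewrite /eI /E hu h0; lia.
have ev0 : eI v (o 0) by rewrite /eI /E hv h0; lia.
have nuv : u != v by apply/negP => /eqP /(congr1 (@nat_of_ord _)); rewrite hu hv; lia.
have nv0 : v != o 0 by apply/negP => /eqP /(congr1 (@nat_of_ord _)); rewrite hv h0; lia.
have nu0 : u != o 0 by apply/negP => /eqP /(congr1 (@nat_of_ord _)); rewrite hu h0; lia.
have Lu : L < u by rewrite hu.
have Lv : L < v by rewrite hv.
case Bu: (c u (o 0) \in Bs).
  have [|[h1 h2]] := route Lu Lv euv; first by rewrite Bu.
  apply: (two_new h1 h2); rewrite (cs euv); exact: cp evu ev0 nu0.
case Bv: (c v (o 0) \in Bs).
  have [|[h1 h2]] := route Lv Lu evu; first by rewrite Bv.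
  apply: (two_new h1 h2); rewrite (cs evu); exact: cp euv eu0 nv0.
apply: (two_new (x := c u (o 0)) (y := c v (o 0))); rewrite ?Bu ?Bv //.
exact: zero_edges.
Qed.

Lemma lb1 : L + d <= K.
Proof.
pose u j := o (L.+1 + 2 * j); pose v j := o (L.+2 + 2 * j).
pose N j := if c (u j) (o 0) \in Bs then c (v j) (o 0) else c (u j) (o 0).
have hu j : j < d -> nat_of_ord (u j) = L.+1 + 2 * j by move=> hj; rewrite oK //; have := NvE; lia.
have hv j : j < d -> nat_of_ord (v j) = L.+2 + 2 * j by move=> hj; rewrite oK //; have := NvE; lia.
have Nnot j : j < d -> N j \notin Bs.
  move=> hj; have Lu : L < u j by rewrite hu //; lia.
  have Lv : L < v j by rewrite hv //; lia.
  have euv : eI (u j) (v j) by rewrite /eI /E hu // hv //; lia.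
  rewrite /N; case Bu: (c (u j) (o 0) \in Bs); last by rewrite Bu.
  by have [|[_ h2]] := route Lu Lv euv; first by rewrite Bu.
have Nuniq : uniq (map N (iota 0 d)).
  rewrite map_inj_in_uniq ?iota_uniq //.
  move=> i j; rewrite !mem_iota => hi hj.
  case: (eqVneq i j) => // nij; rewrite /N.
  have ne : forall x y : 'I_Nv.+1, L < x -> L < y -> x != y -> c x (o 0) = c y (o 0) -> i = j.
    by move=> x y hx hy xy eq; move: (zero_edges hx hy xy); rewrite eq eqxx.
  have ne2 : forall (x y : 'I_Nv.+1) (a b : nat), nat_of_ord x = a -> nat_of_ord y = b -> L < a -> L < b -> a != b ->
      c x (o 0) = c y (o 0) -> i = j.
    move=> x y a b hx hy ha hb ab; apply: ne; rewrite ?hx ?hy //.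
    by apply/negP => /eqP /(congr1 (@nat_of_ord _)); rewrite hx hy; apply/eqP.
  case: ifP => _; case: ifP => _; apply: ne2; rewrite ?hu ?hv //; lia.
have U : uniq (Bs ++ map N (iota 0 d)).
  rewrite cat_uniq Buniq Nuniq andbT /=; apply/hasPn => z /mapP [j hj ->].
  by apply: Nnot; move: hj; rewrite mem_iota.
have := uniq_size_ord U; rewrite size_cat !size_map !size_iota; lia.
Qed.

End LB.

End G.

Theorem theorem3p4 (k t : nat) (ht : 1 <= t) (hkt : t <= k) :
  exists (n : nat) (e : rel 'I_n),
    [/\ simple_graph e, connected_graph e,
        max_degree e = 2 * t ^ 2 + 1,
        diameter e = 2 * t ^ 2 + 1 + k
      & rc e + t <= prc e].
Proof.
have L1 : 0 < 2 * t ^ 2 + k by lia.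
have d1 : 0 < t ^ 2 by rewrite expn_gt0 ht.
exists (Nv (2 * t ^ 2 + k) (t ^ 2)).+1, (@eI (2 * t ^ 2 + k) (t ^ 2)); split.
- exact: simple_eI.
- exact: conn_eI.
- by rewrite maxdeg //; lia.
- by rewrite diam_eq //; lia.
- have [[c [cs cp cr]] _] := least_spec (@prc_exists _ _ (conn_eI L1 d1)).
  have h1 := @lb1 _ _ L1 d1 _ _ cs cp cr.
  have h2 := @lb2 _ _ L1 d1 _ _ cs cp cr.
  have h3 := rc_le L1 d1.
  move: h1 h2 h3; rewrite /prc /Kc.
  move: (least _) (rc _) => P R.
  case: (eqVneq t 1) => [->|t1] /=; first lia.
  rewrite -mulnn.
  have t2 : 2 <= t by lia.
  have -> : (t * t == 1) = false by apply/negbTE; apply/eqP; nia.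
  have : t + 2 <= t * t by nia.
  lia.
Qed.
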